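(* Let $\Sigma$ be a signature and let $t_1=t_2$ be a one-drop equation between $\Sigma$-terms. Let $T$ be a monoidal monad on $\mathbf{Set}$, and let $\mathbf{1}$ denote the unique $\Sigma$-algebra whose carrier is a one-element set $1$. If $\widehat{T}\mathbf{1}\models t_1=t_2$ (i.e. the equation holds in the lifted algebra with carrier $T1$), then $T$ is affine.
   Context: All monads are on $\mathbf{Set}$ with its Cartesian monoidal structure. A monoidal monad is a monad $(T,\eta,\mu)$ together with a natural transformation $\psi_{X,Y}\colon TX\times TY\to T(X\times Y)$ making $T$ a lax monoidal functor with unit map $\psi^0=\eta_1\colon 1\to T1$, such that $\eta$ and $\mu$ are monoidal natural transformations (equivalently, a commutative monad with its canonical double strength). For $n\ge 2$, $\psi^n\colon TX_1\times\dots\times TX_n\to T(X_1\times\dots\times X_n)$ is the $n$-ary map built associatively from $\psi$; $\psi^1=\mathrm{id}$ and $\psi^0=\eta_1$. A signature $\Sigma$ is a set of operation symbols $\sigma$ with arities $\mathrm{ar}(\sigma)\in\mathbb{N}$; a $\Sigma$-algebra $\mathcal{A}$ is a set $A$ with maps $\sigma_{\mathcal A}\colon A^{\mathrm{ar}(\sigma)}\to A$; $\mathcal A\models t_1=t_2$ means both terms evaluate equally under every assignment of variables to elements of $A$. The lifted algebra $\widehat{T}\mathcal{A}$ has carrier $TA$ and operations $\sigma_{\widehat T\mathcal A}=T\sigma_{\mathcal A}\circ\psi^{\mathrm{ar}(\sigma)}\colon (TA)^{\mathrm{ar}(\sigma)}\to TA$. A monoidal monad $T$ is affine if $T1$ is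 terminal (a one-element set); equivalently $\chi_{A,B}\circ\psi_{A,B}=\mathrm{id}_{TA\times TB}$ for all $A,B$, where $\chi_{A,B}=\langle T\pi_1,T\pi_2\rangle\colon T(A\times B)\to TA\times TB$. An equation $t_1=t_2$ is one-drop if some variable occurs exactly once in $t_1$ and does not occur in $t_2$, or exactly once in $t_2$ and not in $t_1$. *)

(* Defs.v *)
(* Set is modelled by Rocq's [Type]. *)
From Stdlib Require Import Vectors.Fin Arith.

Set Implicit Arguments.

Record MonoidalMonad : Type := {
  T :> Type -> Type;
  fmap : forall A B : Type, (A -> B) -> T A -> T B;
  fmap_id : forall A (x : T A), fmap (fun a => a) x = x;
  fmap_comp : forall A B C (f : A -> B) (g : B -> C) (x : T A),
      fmap (fun a => g (f a)) x = fmap g (fmap f x);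
  eta : forall A : Type, A -> T A;
  mu : forall A : Type, T (T A) -> T A;
  eta_nat : forall A B (f : A -> B) (a : A), fmap f (eta a) = eta (f a);
  mu_nat : forall A B (f : A -> B) (x : T (T A)),
      fmap f (mu x) = mu (fmap (fmap f) x);
  mu_eta : forall A (x : T A), mu (eta x) = x;
  mu_fmap_eta : forall A (x : T A), mu (fmap (@eta A) x) = x;
  mu_assoc : forall A (x : T (T (T A))), mu (mu x) = mu (fmap (@mu A) x);
  (* lax monoidal structure psi, with unit map psi^0 = eta_1 *)
  psi : forall A B : Type, T A * T B -> T (A * B);
  psi_nat : forall A A' B B' (f : A -> A') (g : B -> B') (a : T A) (b : T B),
      psi (fmap f a, fmap g b) = fmap (fun p => (f (fst p), g (snd p))) (psi (a, b));
  psi_assoc : forall A B C (a : T A) (b : T B) (c : T C),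
      fmap (fun p => (fst (fst p), (snd (fst p), snd p))) (psi (psi (a, b), c))
      = psi (a, psi (b, c));
  psi_unit_l : forall B (b : T B), fmap (@snd unit B) (psi (eta tt, b)) = b;
  psi_unit_r : forall A (a : T A), fmap (@fst A unit) (psi (a, eta tt)) = a;
  eta_monoidal : forall A B (a : A) (b : B), psi (eta a, eta b) = eta (a, b);
  (* mu is a monoidal natural transformation (T∘T carries T psi ∘ psi, T eta_1 ∘ eta_1) *)
  mu_monoidal : forall A B (x : T (T A)) (y : T (T B)),
      mu (fmap (@psi A B) (psi (x, y))) = psi (mu x, mu y);
  mu_monoidal_unit : mu (fmap (@eta unit) (eta tt)) = eta tt
}.

Arguments fmap {_ _ _} _ _.
Arguments eta {_ _} _.
Arguments mu {_ _} _.
Arguments psi {_ _ _} _.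

(** Affine: T 1 is terminal (a one-element set; it is inhabited by eta tt). *)
Definition affine (M : MonoidalMonad) : Prop :=
  forall x y : M unit, x = y.

Fixpoint prodn (X : Type) (n : nat) : Type :=
  match n with
  | 0 => unit
  | 1 => X
  | S ((S _) as m) => (X * prodn X m)%type
  end.

Fixpoint psin (M : MonoidalMonad) (X : Type) (n : nat) : prodn (M X) n -> M (prodn X n) :=
  match n as n0 return prodn (M X) n0 -> M (prodn X n0) with
  | 0 => fun _ => eta tt
  | S m =>
      match m as m0 return (prodn (M X) m0 -> M (prodn X m0)) ->
                           prodn (M X) (S m0) -> M (prodn X (S m0)) with
      | 0 => fun _ x => x
      | S k => fun rec p => psi (fst p, rec (snd p))
      end (psin M X m)
  end.

Record signature : Type := { sym :> Type; ar : sym -> nat }.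

Inductive term (S : signature) : Type :=
| Var : nat -> term S
| Op : forall s : S, (Fin.t (ar S s) -> term S) -> term S.

Record algebra (S : signature) : Type := {
  carrier :> Type;
  ops : forall s : S, prodn carrier (ar S s) -> carrier }.

Fixpoint tup (X : Type) (n : nat) : (Fin.t n -> X) -> prodn X n :=
  match n as n0 return (Fin.t n0 -> X) -> prodn X n0 with
  | 0 => fun _ => tt
  | S m =>
      match m as m0 return (((Fin.t m0 -> X) -> prodn X m0) ->
                            (Fin.t (S m0) -> X) -> prodn X (S m0)) with
      | 0 => fun _ f => f Fin.F1
      | S k => fun rec f => (f Fin.F1, rec (fun i => f (Fin.FS i)))
      end (@tup X m)
  end.

Fixpoint eval (S : signature) (A : algebra S) (rho : nat -> A) (t : term S) : A :=
  match t with
  | Var _ v => rho v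
  | Op s args => ops A s (tup (fun i => eval A rho (args i)))
  end.

Definition models (S : signature) (A : algebra S) (t1 t2 : term S) : Prop :=
  forall rho : nat -> A, eval A rho t1 = eval A rho t2.

Fixpoint fsum (n : nat) : (Fin.t n -> nat) -> nat :=
  match n as n0 return (Fin.t n0 -> nat) -> nat with
  | 0 => fun _ => 0
  | S m => fun f => f Fin.F1 + @fsum m (fun i => f (Fin.FS i))
  end.

Fixpoint occ (S : signature) (v : nat) (t : term S) : nat :=
  match t with
  | Var _ w => if Nat.eqb v w then 1 else 0
  | Op s args => fsum (fun i => occ v (args i))
  end.

Definition one_drop (S : signature) (t1 t2 : term S) : Prop :=
  exists v : nat, (occ v t1 = 1 /\ occ v t2 = 0) \/ (occ v t2 = 1 /\ occ v t1 = 0).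

Definition one_alg (S : signature) : algebra S :=
  {| carrier := unit; ops := fun _ _ => tt |}.

Definition lift_alg (M : MonoidalMonad) (S : signature) (A : algebra S) : algebra S :=
  {| carrier := M (carrier A);
     ops := fun s xs => fmap (ops A s) (psin M (carrier A) (ar S s) xs) |}.

(* Main.v *)
Require Import Defs.
From Stdlib Require Import Vectors.Fin Arith Lia FunctionalExtensionality.

Section S0.
Variable M : MonoidalMonad.

Lemma allunit (n : nat) (f : Fin.t n -> M unit) :
  (forall i, f i = eta tt) -> exists u, psin M unit n (tup f) = eta u.
Proof.
  induction n as [|m IH]; intros H.
  - exists tt; reflexivity.
  - destruct m as [|k].
    + exists tt; simpl. apply H.
    + destruct (IH (fun i => f (Fin.FS i))) as [u Hu]; [intros; apply H|].
      exists (tt, u). change (psi (f Fin.F1, psin M unit (S k) (tup (fun i => f (Fin.FS i)))) = eta (tt, u)).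
      rewrite Hu, H. apply eta_monoidal.
Qed.

Lemma fmap_unit (x : M unit) : fmap (fun _ : unit => tt) x = x.
Proof.
  rewrite <- (fmap_id M unit x) at 2. f_equal. apply functional_extensionality. intros []; reflexivity.
Qed.

Lemma one_x (n : nat) (f : Fin.t n -> M unit) (j : Fin.t n) (x : M unit) :
  f j = x -> (forall i, i <> j -> f i = eta tt) ->
  fmap (fun _ => tt) (psin M unit n (tup f)) = x.
Proof.
  revert f j. induction n as [|m IH]; intros f j Hj Ho.
  - apply Fin.case0; exact j.
  - destruct m as [|k].
    + simpl. rewrite fmap_unit. revert Hj Ho. pattern j. apply Fin.caseS'.
      * auto.
      * intros p. apply Fin.case0; exact p.
    + change (fmap (fun _ => tt) (psi (f Fin.F1, psin M unit (S k) (tup (fun i => f (Fin.FS i))))) = x).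
      revert Hj Ho. pattern j. apply Fin.caseS'.
      * intros Hj Ho.
        destruct (allunit (S k) (fun i => f (Fin.FS i))) as [u Hu].
        { intros i. apply Ho. discriminate. }
        rewrite Hu, Hj.
        rewrite <- (fmap_id M unit x) at 1.
        rewrite <- (eta_nat M (fun _ : unit => u) tt).
        rewrite psi_nat. rewrite <- fmap_comp.
        rewrite <- (psi_unit_r M unit x) at 2. f_equal.
        apply functional_extensionality. intros [[] []]; reflexivity.
      * intros p Hj Ho.
        rewrite (Ho Fin.F1) by discriminate.
        set (Y := psin M unit (S k) (tup (fun i => f (Fin.FS i)))).
        change (fmap (fun a => (fun _ : prodn unit (S k) => tt) (snd a)) (psi (eta tt, Y)) = x).
        rewrite fmap_comp, psi_unit_l. unfold Y.
        apply (IH (fun i => f (Fin.FS i)) p Hj).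
        intros i Hi. apply Ho. intros E. apply Hi. apply Fin.FS_inj. exact E.
Qed.
End S0.

Lemma fsum0 n (f : Fin.t n -> nat) : fsum f = 0 -> forall i, f i = 0.
Proof.
  induction n as [|m IH]; intros H i.
  - apply Fin.case0; exact i.
  - simpl in H. pattern i. apply Fin.caseS'.
    + lia.
    + intros p. apply (IH (fun i => f (Fin.FS i))). lia.
Qed.

Arguments fsum0 {n} f _ i.

Lemma fsum1 n (f : Fin.t n -> nat) : fsum f = 1 ->
  exists j, f j = 1 /\ forall i, i <> j -> f i = 0.
Proof.
  induction n as [|m IH]; intros H.
  - discriminate.
  - simpl in H. destruct (f Fin.F1) eqn:E.
    + destruct (IH (fun i => f (Fin.FS i))) as [j [Hj Ho]]; [lia|].
      exists (Fin.FS j). split; [exact Hj|].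
      intros i. pattern i. apply Fin.caseS'.
      * intros _; exact E.
      * intros p Hp. apply Ho. intros ->. apply Hp; reflexivity.
    + exists Fin.F1. split; [lia|].
      intros i. pattern i. apply Fin.caseS'.
      * intros C; exfalso; apply C; reflexivity.
      * intros p _. apply (fsum0 (fun i => f (Fin.FS i))). lia.
Qed.

Arguments fsum1 {n} f _.

Theorem lemma4 (S : signature) (t1 t2 : term S) (M : MonoidalMonad) :
  one_drop t1 t2 ->
  models (lift_alg M (one_alg S)) t1 t2 ->
  affine M.
Proof.
  intros [v Hv] Hm.
  assert (key : forall x : M unit, x = eta tt).
  { intros x.
    set (rho := fun w => if Nat.eqb v w then x else eta tt).
    assert (G : forall t : term S,
      (occ v t = 0 -> eval (lift_alg M (one_alg S)) rho t = eta tt) /\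
      (occ v t = 1 -> eval (lift_alg M (one_alg S)) rho t = x)).
    { induction t as [w | s args IH].
      - simpl. unfold rho. destruct (Nat.eqb v w); split; intros; congruence.
      - simpl. split; intros H.
        + destruct (allunit M (ar S s)
                     (fun i => eval (lift_alg M (one_alg S)) rho (args i))) as [u Hu].
          { intros i. apply (IH i). exact (fsum0 _ H i). }
          rewrite Hu. apply eta_nat.
        + destruct (fsum1 _ H) as [j [Hj Ho]].
          apply (one_x M _ _ j).
          * apply (IH j). exact Hj.
          * intros i Hi. apply (IH i). apply Ho; exact Hi. }
    specialize (Hm rho).
    destruct Hv as [[A B]|[A B]].
    - rewrite <- (proj2 (G t1) A), <- (proj1 (G t2) B). exact Hm.
    - rewrite <- (proj2 (G t2) A), <- (proj1 (G t1) B). symmetry; exact Hm. }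
  intros x y. rewrite (key x), (key y). reflexivity.
Qed.
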